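(* Let $k>1$ be an integer with $k\equiv 1\pmod 4$, and let $\mathrm{SG}(n)$ denote the Sprague--Grundy value of a pile of $n$ tokens in the game $i\textsc{-Mark}(\{2\},\{k\})$. Let $b=2k$, $c_0=4k$, $c_m=k(c_{m-1}+2)$ for $m\ge1$, and $a_0=k$, $a_m=k(a_{m-1}+2)$ for $m\ge 1$ (so that $a_0<b<c_0<a_1<c_1<a_2<\cdots$). Let $X=[0,a_0-1]$, $Y=[a_0+1,b-1]$, $Z=[b+1,c_0-1]$, and for $m\ge 1$ let $A_m=[c_{m-1}+1,a_m-1]$ and $C_m=[a_m+1,c_m-1]$ (integer intervals). Then: (1) $\mathrm{SG}(b)=2$, and $\mathrm{SG}(a_m)=\mathrm{SG}(c_m)=2$ for all $m\ge 0$; (2) the sequence of SG values of the elements of $X$, in increasing order, is $(0,0,1,1)^{z},0$ with $z=(a_0-1)/4$; (3) the sequence of SG values of the elements of $Y$ is $(1,0,0,1)^{z'}$ with $z'=(b-a_0-1)/4$; (4) the sequence of SG values of the elements of $Z$ is $(0,0,1,1)^{z''},0$ with $z''=(c_0-b-2)/4$; (5) for every $m\ge 1$, the sequence of SG values of the elements of $A_m$ is $(1,0,0,1)^{y_m},1,0$ with $y_m=(a_m-c_{m-1}-3)/4$; (6) for every $m\ge 1$, the sequence of SG values of the elements of $C_m$ is $(1,0,0,1)^{y'_m},1,0$ with $y'_m=(c_m-a_m-3)/4$. Here $X^z$ denotes the $z$-fold concatenation of the finite sequence $X$.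
   Context: For a nonempty set $S$ of positive integers and a nonempty set $D$ of integers larger than $1$, the impartial game $i\textsc{-Mark}(S,D)$ is played on a single pile of $n\ge 0$ tokens: a move either replaces $n$ by $n-s$ for some $s\in S$ with $s\le n$, or replaces $n$ by $n/d$ for some $d\in D$ dividing $n$ (with $n>0$). The Sprague--Grundy value is defined recursively by $\mathrm{SG}(n)=\mathrm{mex}\{\mathrm{SG}(w): w \text{ an option of } n\}$, where $\mathrm{mex}(T)$ is the smallest nonnegative integer not in $T$. *)

(* Defs.v *)
From mathcomp Require Import all_boot.
Set Implicit Arguments. Unset Strict Implicit. Unset Printing Implicit Defensive.

(* mex of a finite list of naturals: least m not in s (it is <= size s). *)
Definition mex (s : seq nat) : nat :=
  find (fun m => m \notin s) (iota 0 (size s).+1).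

Definition imark_options (S D : seq nat) (n : nat) : seq nat :=
  [seq n - s | s <- S & s <= n] ++ [seq n %/ d | d <- D & (0 < n) && (d %| n)].

(* Fuel-based Sprague-Grundy recursion; every option of n is < n whenever
   S consists of positive integers and D of integers > 1, so fuel n.+1 suffices. *)
Fixpoint sg_fuel (S D : seq nat) (fuel n : nat) : nat :=
  match fuel with
  | 0 => 0
  | f.+1 => mex [seq sg_fuel S D f w | w <- imark_options S D n]
  end.

Definition SG (S D : seq nat) (n : nat) : nat := sg_fuel S D n.+1 n.

Definition interval (lo hi : nat) : seq nat := iota lo (hi.+1 - lo).

Definition rep (z : nat) (s : seq nat) : seq nat := flatten (nseq z s).

Fixpoint a_seq (k m : nat) : nat :=
  match m with 0 => k | m'.+1 => k * (a_seq k m' + 2) end.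
Fixpoint c_seq (k m : nat) : nat :=
  match m with 0 => 4 * k | m'.+1 => k * (c_seq k m' + 2) end.

(* Main.v *)
Require Import Defs.
From mathcomp Require Import all_boot zify.

Definition g (r n : nat) : nat := if n %% 4 == r then 1 else 0.

Lemma opts_lt {k n w} : 1 < k -> w \in imark_options [::2] [::k] n -> w < n.
Proof.
move=> hk; rewrite /imark_options /=.
case: ifP => H2; case: ifP => /= Hd; rewrite ?inE => /=.
- case/orP=> /eqP ->; first lia.
  case/andP: Hd => Hn _; exact: ltn_Pdiv.
- move=> /eqP ->; lia.
- move=> /eqP ->; case/andP: Hd => Hn _; exact: ltn_Pdiv.
- by [].
Qed.

Lemma fuel_eq k (hk : 1 < k) f1 f2 n : n < f1 -> n < f2 ->
  sg_fuel [::2] [::k] f1 n = sg_fuel [::2] [::k] f2 n.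
Proof.
elim: f1 f2 n => [|f IH] [|f'] n //= H1 H2.
congr mex; apply/eq_in_map => w Hw.
have := opts_lt (n:=n) hk Hw; move=> Hwn.
apply: IH; lia.
Qed.

Lemma SG_step k (hk : 1 < k) n : SG [::2] [::k] n =
  mex [seq SG [::2] [::k] w | w <- imark_options [::2] [::k] n].
Proof.
rewrite {1}/SG.
change (sg_fuel [::2] [::k] n.+1 n) with
  (mex [seq sg_fuel [::2] [::k] n w | w <- imark_options [::2] [::k] n]).
congr mex; apply/eq_in_map => w Hw.
have := opts_lt (n:=n) hk Hw => Hwn; rewrite /SG; apply: (fuel_eq k hk); lia.
Qed.

Lemma SG0 k (hk : 1 < k) : SG [::2] [::k] 0 = 0.
Proof. by rewrite SG_step. Qed.

Lemma SG1 {k} (hk : 1 < k) : SG [::2] [::k] 1 = 0.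
Proof. rewrite SG_step // /imark_options /=.
have -> : (k %| 1) = false by apply/negP => /dvdn_leq; lia.
by []. Qed.

Lemma SGr2 {k} (hk : 1 < k) {n} : 2 <= n -> ~~ (k %| n) ->
  SG [::2] [::k] n = mex [:: SG [::2] [::k] (n - 2)].
Proof.
move=> H2 Hd; rewrite SG_step // /imark_options /= H2 /=.
by rewrite (negbTE Hd) andbF.
Qed.

Lemma SGr3 {k} (hk : 1 < k) {n} : 2 <= n -> k %| n ->
  SG [::2] [::k] n = mex [:: SG [::2] [::k] (n - 2); SG [::2] [::k] (n %/ k)].
Proof.
move=> H2 Hd; rewrite SG_step // /imark_options /= H2 /= Hd andbT.
have -> : 0 < n by lia.
by [].
Qed.
Lemma kmod k (hk4 : k %% 4 = 1) x : (k * x) %% 4 = x %% 4.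
Proof. by rewrite -modnMml hk4 mul1n. Qed.

Lemma kmodr k (hk4 : k %% 4 = 1) x : (x * k) %% 4 = x %% 4.
Proof. by rewrite mulnC kmod. Qed.

Lemma aS k m : a_seq k m.+1 = k * (a_seq k m + 2). Proof. by []. Qed.
Lemma cS k m : c_seq k m.+1 = k * (c_seq k m + 2). Proof. by []. Qed.

Lemma grow k (hk : 5 <= k) x : 5 * (x + 2) <= k * (x + 2).
Proof. by rewrite leq_mul2r hk orbT. Qed.

Lemma a_ge k m : 0 < k -> k <= a_seq k m.
Proof. move=> hk; case: m => [|m] //=; rewrite leq_pmulr //; lia. Qed.



Lemma dvd_a k m : k %| a_seq k m.
Proof. case: m => [|m] /=; [exact: dvdnn | exact: dvdn_mulr]. Qed.
Lemma dvd_c k m : k %| c_seq k m.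
Proof. case: m => [|m] /=; [exact: dvdn_mull | exact: dvdn_mulr]. Qed.

Lemma ac_mod k (hk4 : k %% 4 = 1) m :
  (c_seq k m %% 4 = 0 \/ c_seq k m %% 4 = 2) /\ a_seq k m %% 4 = c_seq k m %% 4 + 1.
Proof.
elim: m => [|m IH] /=; first lia.
rewrite !kmod //; lia.
Qed.

Lemma ac_lt k (hk : 5 <= k) m : a_seq k m < c_seq k m /\ c_seq k m < a_seq k m.+1.
Proof.
have k0 : 0 < k by lia.
elim: m => [|m [IH1 IH2]].
  rewrite /=; split; first lia.
  rewrite [4 * k]mulnC ltn_pmul2l //; lia.
split; [rewrite aS cS ltn_pmul2l //; lia | rewrite cS (aS k m.+1) ltn_pmul2l //; lia].
Qed.

Inductive spec (k : nat) : nat -> nat -> Prop :=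
| SB1 n : odd n -> n < k -> spec k n (g 3 n)
| SB2 n : ~~ odd n -> n < 2 * k -> spec k n (g 2 n)
| STa m : spec k (a_seq k m) 2
| STb : spec k (2 * k) 2
| STc m : spec k (c_seq k m) 2
| SRa m n : odd n -> a_seq k m < n < a_seq k m.+1 -> spec k n (g (a_seq k m %% 4) n)
| SRb n : ~~ odd n -> 2 * k < n < 4 * k -> spec k n (g 2 n)
| SRc m n : ~~ odd n -> c_seq k m < n < c_seq k m.+1 -> spec k n (g (c_seq k m %% 4) n).

Ltac closeg := rewrite /g; repeat (case: eqP => ?); first [reflexivity | lia].

Lemma ndvd2 k x : 2 < k -> k %| x -> ~~ (k %| x + 2).
Proof. move=> hk hx; rewrite dvdn_addr //; apply/negP => /dvdn_leq; lia. Qed.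

Lemma mainSG k (hk1 : 1 < k) (hk4 : k %% 4 = 1) n v :
  spec k n v -> SG [::2] [::k] n = v.
Proof.
have k5 : 5 <= k by lia.
have k0 : 0 < k by lia.
elim/ltn_ind: n v => n IH v Hs.
move: IH; case: n v / Hs => [n Ho Hlt|n Ho Hlt|m| |m| m n Ho Hlt| n Ho Hlt| m n Ho Hlt] IH.
-
  case: n Ho Hlt IH => [|[|n]] Ho Hlt IH //; first by rewrite (SG1 hk1).
  have Hd : ~~ (k %| n.+2) by apply/negP => /dvdn_leq; lia.
  have H2 : 2 <= n.+2 by [].
  rewrite (SGr2 hk1 H2 Hd).
  rewrite (IH (n.+2 - 2) _ (g 3 (n.+2 - 2))); [closeg | lia | apply: SB1; lia].
-
  case: n Ho Hlt IH => [|[|n]] Ho Hlt IH //.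
  have Hd : ~~ (k %| n.+2).
    apply/negP => /dvdnP [q Hq].
    case: q Hq => [|[|q]] Hq; [lia | rewrite mul1n in Hq; lia |].
    have : 2 * k <= q.+2 * k by rewrite leq_mul2r; lia.
    lia.
  have H2 : 2 <= n.+2 by [].
  rewrite (SGr2 hk1 H2 Hd).
  rewrite (IH (n.+2 - 2) _ (g 2 (n.+2 - 2))); [closeg | lia | apply: SB2; lia].
-
  case: m IH => [|m] IH.
  + rewrite /= in IH *. have H2 : 2 <= k by lia.
    rewrite (SGr3 hk1 H2 (dvdnn k)) divnn k0 /=.
    rewrite (IH (k - 2) _ (g 3 (k - 2))); [|lia|apply: SB1; lia].
    rewrite (IH 1 _ (g 3 1)); [|lia|apply: SB1; lia].
    closeg.
  + have [Hm1 Hm2] := ac_mod k hk4 m.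
    have [Hl1 Hl2] := ac_lt k k5 m.
    have Hg := grow k k5 (a_seq k m).
    have Hq : a_seq k m.+1 %/ k = a_seq k m + 2 by rewrite aS mulKn.
    have Hmod : a_seq k m.+1 %% 4 = (a_seq k m + 2) %% 4 by rewrite aS kmod.
    rewrite -aS in Hg.
    have H2 : 2 <= a_seq k m.+1 by lia.
    rewrite (SGr3 hk1 H2 (dvd_a k _)) Hq.
    rewrite (IH (a_seq k m.+1 - 2) _ (g (a_seq k m %% 4) (a_seq k m.+1 - 2)));
      [|lia|apply: SRa; lia].
    rewrite (IH (a_seq k m + 2) _ (g (a_seq k m %% 4) (a_seq k m + 2)));
      [|lia|apply: SRa; lia].
    closeg.
-
  have H2 : 2 <= 2 * k by lia.
  rewrite (SGr3 hk1 H2 (dvdn_mull 2 (dvdnn k))) mulnK //.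
  rewrite (IH (2 * k - 2) _ (g 2 (2 * k - 2))); [|lia|apply: SB2; lia].
  rewrite (IH 2 _ (g 2 2)); [|lia|apply: SB2; lia].
  closeg.
-
  case: m IH => [|m] IH.
  + rewrite /= in IH *. have H2 : 2 <= 4 * k by lia.
    rewrite (SGr3 hk1 H2 (dvdn_mull 4 (dvdnn k))) mulnK //.
    rewrite (IH (4 * k - 2) _ (g 2 (4 * k - 2))); [|lia|apply: SRb; lia].
    rewrite (IH 4 _ (g 2 4)); [|lia|apply: SB2; lia].
    closeg.
  + have [Hm1 Hm2] := ac_mod k hk4 m.
    have [Hl1 Hl2] := ac_lt k k5 m.
    have Hg := grow k k5 (c_seq k m).
    have Hq : c_seq k m.+1 %/ k = c_seq k m + 2 by rewrite cS mulKn.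
    have Hmod : c_seq k m.+1 %% 4 = (c_seq k m + 2) %% 4 by rewrite cS kmod.
    rewrite -cS in Hg.
    have H2 : 2 <= c_seq k m.+1 by lia.
    rewrite (SGr3 hk1 H2 (dvd_c k _)) Hq.
    rewrite (IH (c_seq k m.+1 - 2) _ (g (c_seq k m %% 4) (c_seq k m.+1 - 2)));
      [|lia|apply: SRc; lia].
    rewrite (IH (c_seq k m + 2) _ (g (c_seq k m %% 4) (c_seq k m + 2)));
      [|lia|apply: SRc; lia].
    closeg.
-
  have k2 : 2 < k by lia.
  have [Hm1 Hm2] := ac_mod k hk4 m.
  have [Hl1 Hl2] := ac_lt k k5 m.
  have Ham := a_ge k m k0.
  have H2 : 2 <= n by lia.
  have Hp : SG [::2] [::k] (n - 2) =
      if n - 2 == a_seq k m then 2 else g (a_seq k m %% 4) (n - 2).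
    case: eqP => E; first by rewrite E; apply: IH; [lia | exact: STa].
    apply: IH; [lia | apply: SRa; lia].
  case Hd: (k %| n); last first.
    by rewrite (SGr2 hk1 H2 (negbT Hd)) Hp; closeg.
  have Hne : (n - 2 == a_seq k m) = false.
    apply/eqP => E; have := ndvd2 _ _ k2 (dvd_a k m).
    have -> : a_seq k m + 2 = n by lia.
    by rewrite Hd.
  rewrite (SGr3 hk1 H2 Hd) Hp Hne.
  have [j Hj] : exists j, n = j * k by exists (n %/ k); rewrite divnK.
  have Hjq : n %/ k = j by rewrite Hj mulnK.
  rewrite Hjq.
  have Hj4 : n %% 4 = j %% 4 by rewrite Hj kmodr.
  have Hoj : odd j by move: Ho; rewrite Hj oddM => /andP [].
  have Hj0 : 0 < j.
    case: j Hj {Hjq Hj4 Hoj} => [|j] Hj //; rewrite mul0n in Hj; lia.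
  have Hjn : j < n by rewrite Hj ltn_Pmulr.
  destruct m as [|m'].
  + have Ha0 : a_seq k 0 = k by [].
    have Ha1 : a_seq k 1 = (k + 2) * k by rewrite /= mulnC.
    have B1 : 1 < j.
      have : 1 * k < j * k by rewrite mul1n -Hj; lia.
      by rewrite ltn_pmul2r.
    have B2 : j < k + 2.
      have : j * k < (k + 2) * k by rewrite -Hj -Ha1; lia.
      by rewrite ltn_pmul2r.
    have Hsj : SG [::2] [::k] j = if j == k then 2 else g 3 j.
      case: eqP => E; first by rewrite E; apply: IH; [lia | exact: (STa k 0)].
      apply: IH; [lia | apply: SB1; lia].
    rewrite Hsj; closeg.
  + have [Hm1' Hm2'] := ac_mod k hk4 m'.
    have Hmod : a_seq k m'.+1 %% 4 = (a_seq k m' + 2) %% 4 by rewrite aS kmod.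
    have B1 : a_seq k m' + 2 < j.
      have : (a_seq k m' + 2) * k < j * k by rewrite -Hj mulnC -aS; lia.
      by rewrite ltn_pmul2r.
    have B2 : j < a_seq k m'.+1 + 2.
      have : j * k < (a_seq k m'.+1 + 2) * k.
        by rewrite -Hj [(_ + 2) * k]mulnC -aS; lia.
      by rewrite ltn_pmul2r.
    have Hsj : SG [::2] [::k] j =
        if j == a_seq k m'.+1 then 2 else g (a_seq k m' %% 4) j.
      case: eqP => E; first by rewrite E; apply: IH; [lia | exact: STa].
      apply: IH; [lia | apply: SRa; lia].
    rewrite Hsj; closeg.
-
  have H2 : 2 <= n by lia.
  have Hd : ~~ (k %| n).
    apply/negP => /dvdnP [q Hq].
    have : 2 * k < q * k by lia.
    rewrite ltn_pmul2r // => Q1.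
    have : q * k < 4 * k by lia.
    rewrite ltn_pmul2r // => Q2.
    have q3 : q = 3 by lia.
    rewrite q3 in Hq; lia.
  have Hp : SG [::2] [::k] (n - 2) =
      if n - 2 == 2 * k then 2 else g 2 (n - 2).
    case: eqP => E; first by rewrite E; apply: IH; [lia | exact: STb].
    apply: IH; [lia | apply: SRb; lia].
  by rewrite (SGr2 hk1 H2 Hd) Hp; closeg.
-
  have k2 : 2 < k by lia.
  have [Hm1 Hm2] := ac_mod k hk4 m.
  have [Hl1 Hl2] := ac_lt k k5 m.
  have Ham := a_ge k m k0.
  have H2 : 2 <= n by lia.
  have Hp : SG [::2] [::k] (n - 2) =
      if n - 2 == c_seq k m then 2 else g (c_seq k m %% 4) (n - 2).
    case: eqP => E; first by rewrite E; apply: IH; [lia | exact: STc].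
    apply: IH; [lia | apply: SRc; lia].
  case Hd: (k %| n); last first.
    by rewrite (SGr2 hk1 H2 (negbT Hd)) Hp; closeg.
  have Hne : (n - 2 == c_seq k m) = false.
    apply/eqP => E; have := ndvd2 _ _ k2 (dvd_c k m).
    have -> : c_seq k m + 2 = n by lia.
    by rewrite Hd.
  rewrite (SGr3 hk1 H2 Hd) Hp Hne.
  have [j Hj] : exists j, n = j * k by exists (n %/ k); rewrite divnK.
  have Hjq : n %/ k = j by rewrite Hj mulnK.
  rewrite Hjq.
  have Hj4 : n %% 4 = j %% 4 by rewrite Hj kmodr.
  have Hoj : ~~ odd j.
    move: Ho; rewrite Hj oddM; apply: contra => Hoj; rewrite Hoj /=; lia.
  have Hj0 : 0 < j.
    case: j Hj {Hjq Hj4 Hoj} => [|j] Hj //; rewrite mul0n in Hj; lia.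
  have Hjn : j < n by rewrite Hj ltn_Pmulr.
  destruct m as [|m'].
  + have Hc0 : c_seq k 0 = 4 * k by [].
    have Hc1 : c_seq k 1 = (4 * k + 2) * k by rewrite /= mulnC.
    have B1 : 4 < j.
      have : 4 * k < j * k by rewrite -Hj; lia.
      by rewrite ltn_pmul2r.
    have B2 : j < 4 * k + 2.
      have : j * k < (4 * k + 2) * k by rewrite -Hj -Hc1; lia.
      by rewrite ltn_pmul2r.
    have Hsj : SG [::2] [::k] j =
        if j == 4 * k then 2 else if j == 2 * k then 2 else g 2 j.
      case: eqP => E; first by rewrite E; apply: IH; [lia | exact: (STc k 0)].
      case: eqP => E'; first by rewrite E'; apply: IH; [lia | exact: STb].
      case: (ltnP j (2 * k)) => Hjk.
        apply: IH; [lia | apply: SB2; lia].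
      apply: IH; [lia | apply: SRb; lia].
    rewrite Hsj; closeg.
  + have [Hm1' Hm2'] := ac_mod k hk4 m'.
    have Hmod : c_seq k m'.+1 %% 4 = (c_seq k m' + 2) %% 4 by rewrite cS kmod.
    have B1 : c_seq k m' + 2 < j.
      have : (c_seq k m' + 2) * k < j * k by rewrite -Hj mulnC -cS; lia.
      by rewrite ltn_pmul2r.
    have B2 : j < c_seq k m'.+1 + 2.
      have : j * k < (c_seq k m'.+1 + 2) * k.
        by rewrite -Hj [(_ + 2) * k]mulnC -cS; lia.
      by rewrite ltn_pmul2r.
    have Hsj : SG [::2] [::k] j =
        if j == c_seq k m'.+1 then 2 else g (c_seq k m' %% 4) j.
      case: eqP => E; first by rewrite E; apply: IH; [lia | exact: STc].
      apply: IH; [lia | apply: SRc; lia].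
    rewrite Hsj; closeg.
Qed.

Lemma chunk (f : nat -> nat) lo p s : s <= size p ->
  (forall t, t < s -> f (lo + t) = nth 0 p t) -> map f (iota lo s) = take s p.
Proof.
move=> Hs Hf; apply: (@eq_from_nth _ 0).
  by rewrite size_map size_iota size_take; case: ltnP => //; lia.
move=> i; rewrite size_map size_iota => Hi.
by rewrite (nth_map 0) ?size_iota // nth_iota // nth_take // Hf.
Qed.

Lemma pattern_map (f : nat -> nat) lo z r p : size p = 4 -> r <= 4 ->
  (forall t, t < 4 * z + r -> f (lo + t) = nth 0 p (t %% 4)) ->
  map f (iota lo (4 * z + r)) = rep z p ++ take r p.
Proof.
move=> Hp Hr; elim: z lo => [|z IH] lo Hf.
  rewrite muln0 add0n /=; apply: chunk; first lia.
  by move=> t Ht; rewrite Hf ?modn_small //; lia.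
have -> : 4 * z.+1 + r = 4 + (4 * z + r) by lia.
rewrite iotaD map_cat (_ : rep z.+1 p = p ++ rep z p) // -catA; congr (_ ++ _).
  rewrite -{1}(take_size p) Hp; apply: chunk; first lia.
  by move=> t Ht; rewrite Hf ?modn_small //; lia.
apply: IH => t Ht.
rewrite -addnA Hf; last lia.
congr (nth 0 p _); lia.
Qed.

Ltac fin4 t := rewrite /g; case: eqP => ?; case E4: (t %% 4) => [|[|[|[|x]]]] /=; lia.

Theorem mainTheorem3 (k : nat) (hk1 : 1 < k) (hk4 : k %% 4 = 1) :
  let sg := SG [:: 2] [:: k] in
  let b := 2 * k in
  let a := a_seq k in
  let c := c_seq k in
  [/\ (sg b = 2 /\ (forall m, sg (a m) = 2 /\ sg (c m) = 2)),
      [seq sg i | i <- interval 0 (a 0 - 1)] = rep ((a 0 - 1) %/ 4) [:: 0; 0; 1; 1] ++ [:: 0],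
      [seq sg i | i <- interval (a 0 + 1) (b - 1)] = rep ((b - a 0 - 1) %/ 4) [:: 1; 0; 0; 1],
      [seq sg i | i <- interval (b + 1) (c 0 - 1)] = rep ((c 0 - b - 2) %/ 4) [:: 0; 0; 1; 1] ++ [:: 0] &
      ((forall m, 1 <= m ->
         [seq sg i | i <- interval (c m.-1 + 1) (a m - 1)]
           = rep ((a m - c m.-1 - 3) %/ 4) [:: 1; 0; 0; 1] ++ [:: 1; 0]) /\
      (forall m, 1 <= m ->
         [seq sg i | i <- interval (a m + 1) (c m - 1)]
           = rep ((c m - a m - 3) %/ 4) [:: 1; 0; 0; 1] ++ [:: 1; 0]))].
Proof.
cbv zeta.
have k5 : 5 <= k by lia.
have k0 : 0 < k by lia.
have E := mainSG k hk1 hk4.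
have Ha0 : a_seq k 0 = k by [].
have Hc0 : c_seq k 0 = 4 * k by [].
have [L01 L02] := ac_lt k k5 0.
rewrite Ha0 Hc0 in L01 L02.
split.
- split; first by apply: E; exact: STb.
  by move=> m; split; apply: E; [exact: STa | exact: STc].
- rewrite /interval Ha0.
  have -> : (k - 1).+1 - 0 = 4 * ((k - 1) %/ 4) + 1 by lia.
  rewrite (_ : [:: 0] = take 1 [:: 0; 0; 1; 1]) //.
  apply: pattern_map => // t Ht; rewrite add0n.
  case Ho: (odd t).
    rewrite (E t (g 3 t)); [fin4 t | apply: SB1; lia].
  rewrite (E t (g 2 t)); [fin4 t | apply: SB2; lia].
- rewrite /interval Ha0.
  have -> : (2 * k - 1).+1 - (k + 1) = 4 * ((2 * k - k - 1) %/ 4) + 0 by lia.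
  rewrite -[rep _ _]cats0 (_ : [::] = take 0 [:: 1; 0; 0; 1]) //.
  apply: pattern_map => // t Ht.
  case Ho: (odd (k + 1 + t)).
    rewrite (E _ (g (a_seq k 0 %% 4) (k + 1 + t))); [rewrite Ha0; fin4 t | apply: SRa; lia].
  rewrite (E _ (g 2 (k + 1 + t))); [fin4 t | apply: SB2; lia].
- rewrite /interval Hc0.
  have -> : (4 * k - 1).+1 - (2 * k + 1) = 4 * ((4 * k - 2 * k - 2) %/ 4) + 1 by lia.
  rewrite (_ : [:: 0] = take 1 [:: 0; 0; 1; 1]) //.
  apply: pattern_map => // t Ht.
  case Ho: (odd (2 * k + 1 + t)).
    rewrite (E _ (g (a_seq k 0 %% 4) (2 * k + 1 + t))); [rewrite Ha0; fin4 t | apply: SRa; lia].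
  rewrite (E _ (g 2 (2 * k + 1 + t))); [fin4 t | apply: SRb; lia].
- split=> m Hm; (destruct m as [|m']; first by []); rewrite /= -/(a_seq k m'.+1) -/(c_seq k m'.+1).
  + have [Hm1 Hm2] := ac_mod k hk4 m'.
    have [Hm1' Hm2'] := ac_mod k hk4 m'.+1.
    have Hmod : a_seq k m'.+1 %% 4 = (a_seq k m' + 2) %% 4 by rewrite aS kmod.
    have [Hl1 Hl2] := ac_lt k k5 m'.
    have [Hl1' Hl2'] := ac_lt k k5 m'.+1.
    rewrite /interval.
    have -> : (a_seq k m'.+1 - 1).+1 - (c_seq k m' + 1) =
      4 * ((a_seq k m'.+1 - c_seq k m' - 3) %/ 4) + 2 by lia.
    rewrite (_ : [:: 1; 0] = take 2 [:: 1; 0; 0; 1]) //.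
    apply: pattern_map => // t Ht.
    case Ho: (odd (c_seq k m' + 1 + t)).
      rewrite (E _ (g (a_seq k m' %% 4) (c_seq k m' + 1 + t))); [fin4 t | apply: SRa; lia].
    rewrite (E _ (g (c_seq k m' %% 4) (c_seq k m' + 1 + t))); [fin4 t | apply: SRc; lia].
  + have [Hm1 Hm2] := ac_mod k hk4 m'.
    have [Hm1' Hm2'] := ac_mod k hk4 m'.+1.
    have Hmod : c_seq k m'.+1 %% 4 = (c_seq k m' + 2) %% 4 by rewrite cS kmod.
    have [Hl1 Hl2] := ac_lt k k5 m'.
    have [Hl1' Hl2'] := ac_lt k k5 m'.+1.
    rewrite /interval.
    have -> : (c_seq k m'.+1 - 1).+1 - (a_seq k m'.+1 + 1) =
      4 * ((c_seq k m'.+1 - a_seq k m'.+1 - 3) %/ 4) + 2 by lia.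
    rewrite (_ : [:: 1; 0] = take 2 [:: 1; 0; 0; 1]) //.
    apply: pattern_map => // t Ht.
    case Ho: (odd (a_seq k m'.+1 + 1 + t)).
      rewrite (E _ (g (a_seq k m'.+1 %% 4) (a_seq k m'.+1 + 1 + t))); [fin4 t | apply: SRa; lia].
    rewrite (E _ (g (c_seq k m' %% 4) (a_seq k m'.+1 + 1 + t))); [fin4 t | apply: SRc; lia].
Qed.
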